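(* Let $G=(U\sqcup V,E)$ be a bipartite graph with integer weights $w:E\to\mathbb{Z}$ that has a perfect matching, let $P=(\pi,p)$ be an optimal solution of the dual assignment program $\max \sum_{u\in U}\pi(u)+\sum_{v\in V}p(v)$ subject to $\pi(u)+p(v)\le w(uv)$ for all $uv\in E$, and let $E_p\subseteq E$. Let $G_{cs}(P)$ be the spanning subgraph of $G$ with edge set $E_{cs}(P)=\{uv\in E:\pi(u)+p(v)=w(uv)\}$, and define $w_p:E_{cs}(P)\to\{0,1\}$ by $w_p(e)=0$ if $e\in E_p$ and $w_p(e)=1$ if $e\notin E_p$. If $M$ is a minimum weight perfect matching of $\{G_{cs}(P),w_p\}$, then $M$ is a minimum weight perfect matching of $\{G,w\}$ and $|M\cap E_p|\ge|M'\cap E_p|$ for every minimum weight perfect matching $M'$ of $\{G,w\}$.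
   Context: A matching is a set of pairwise vertex-disjoint edges; it is perfect if it covers all vertices. For a weight function $c$ on the edges of a graph $H$, the weight of a matching $M$ is $\sum_{e\in M}c(e)$, and a minimum weight perfect matching of $\{H,c\}$ is a perfect matching of $H$ of minimum weight. The dual assignment program is the linear-programming dual of the assignment linear program $\min\sum_{uv}x(uv)w(uv)$ subject to each vertex having total incident $x$-value $1$ and $x\ge0$. *)

(* Defs.v *)
From mathcomp Require Import all_boot all_order all_algebra.
Set Implicit Arguments. Unset Strict Implicit. Unset Printing Implicit Defensive.
Import Order.TTheory GRing.Theory Num.Theory.
Local Open Scope ring_scope.

(* A bipartite graph on U ⊔ V is given by its edge set F : {set U * V};
   an edge uv is the pair (u, v). *)
Section Matchings.
Variables U V : finType.

Definition is_matching (F M : {set U * V}) : Prop :=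
  M \subset F /\
  (forall e1 e2, e1 \in M -> e2 \in M -> e1 != e2 ->
     e1.1 != e2.1 /\ e1.2 != e2.2).

Definition is_perfect_matching (F M : {set U * V}) : Prop :=
  is_matching F M /\
  (forall u : U, exists v : V, (u, v) \in M) /\
  (forall v : V, exists u : U, (u, v) \in M).

Definition mweight (R : nmodType) (c : U * V -> R) (M : {set U * V}) : R :=
  \sum_(e in M) c e.

Definition is_min_weight_pm (R : numDomainType) (F : {set U * V})
    (c : U * V -> R) (M : {set U * V}) : Prop :=
  is_perfect_matching F M /\
  (forall M', is_perfect_matching F M' -> mweight c M <= mweight c M').

Definition dual_feasible (R : numDomainType) (F : {set U * V})
    (w : U * V -> int) (pi : U -> R) (p : V -> R) : Prop :=
  forall u v, (u, v) \in F -> pi u + p v <= (w (u, v))%:~R.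

Definition dual_objective (R : numDomainType) (pi : U -> R) (p : V -> R) : R :=
  \sum_(u : U) pi u + \sum_(v : V) p v.

Definition dual_optimal (R : numDomainType) (F : {set U * V})
    (w : U * V -> int) (pi : U -> R) (p : V -> R) : Prop :=
  dual_feasible F w pi p /\
  (forall pi' p', dual_feasible F w pi' p' ->
     dual_objective pi' p' <= dual_objective pi p).

Definition Ecs (R : numDomainType) (F : {set U * V})
    (w : U * V -> int) (pi : U -> R) (p : V -> R) : {set U * V} :=
  [set e in F | pi e.1 + p e.2 == (w e)%:~R].

Definition wp (Ep : {set U * V}) (e : U * V) : int :=
  if e \in Ep then 0 else 1.
End Matchings.

(* Main.v *)
Require Import Defs.
From mathcomp Require Import all_boot all_order all_algebra.
From mathcomp Require Import zify.
Set Implicit Arguments. Unset Strict Implicit.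
Import Order.TTheory GRing.Theory Num.Theory.
Local Open Scope ring_scope.

Section Aux.
Variables (U V : finType).

Lemma pm_fst (F M : {set U * V}) (R : nmodType) (g : U -> R) :
  is_perfect_matching F M -> \sum_(e in M) g e.1 = \sum_u g u.
Proof.
move=> [[_ Hm] [Hu _]].
have inj : {in M &, injective (fun e : U * V => e.1)}.
  move=> e1 e2 H1 H2 Heq; apply/eqP; apply/negPn/negP => Hne.
  by move: (Hm _ _ H1 H2 Hne) => [/eqP]; rewrite Heq.
rewrite -(big_imset g inj) /=.
apply: eq_bigl => u; apply/imsetP.
by have [v Hv] := Hu u; exists (u, v).
Qed.

Lemma pm_snd (F M : {set U * V}) (R : nmodType) (g : V -> R) :
  is_perfect_matching F M -> \sum_(e in M) g e.2 = \sum_v g v.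
Proof.
move=> [[_ Hm] [_ Hv]].
have inj : {in M &, injective (fun e : U * V => e.2)}.
  move=> e1 e2 H1 H2 Heq; apply/eqP; apply/negPn/negP => Hne.
  by move: (Hm _ _ H1 H2 Hne) => [_ /eqP]; rewrite Heq.
rewrite -(big_imset g inj) /=.
apply: eq_bigl => v; apply/imsetP.
by have [u Hu] := Hv v; exists (u, v).
Qed.

Lemma pm_card (F M : {set U * V}) : is_perfect_matching F M -> #|M| = #|U|.
Proof.
move=> H; have := pm_fst (fun _ : U => 1%N) H.
by rewrite !sum1_card.
Qed.

Lemma pm_obj (R : numDomainType) (F M : {set U * V}) (pi : U -> R) (p : V -> R) :
  is_perfect_matching F M ->
  \sum_(e in M) (pi e.1 + p e.2) = dual_objective pi p.
Proof.
by move=> H; rewrite big_split /= (pm_fst pi H) (pm_snd p H).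
Qed.

Lemma wp_weight (Ep M : {set U * V}) :
  mweight (wp Ep) M = (#|M :\: Ep|)%:Z.
Proof.
rewrite /mweight /wp (big_setID Ep) /=.
rewrite [X in X + _]big1 ?add0r; last by by move=> e /setIP [_ ->].
rewrite (eq_bigr (fun _ => 1)); last by move=> e /setDP [_ /negPf ->].
rewrite sumr_const; exact: natz.
Qed.
End Aux.

Theorem proposition3p9 (U V : finType) (R : realFieldType)
    (E : {set U * V}) (w : U * V -> int) (pi : U -> R) (p : V -> R)
    (Ep M : {set U * V}) :
  (exists M0, is_perfect_matching E M0) ->
  dual_optimal E w pi p ->
  Ep \subset E ->
  is_min_weight_pm (Ecs E w pi p) (wp Ep) M ->
  is_min_weight_pm E w M /\
  (forall M', is_min_weight_pm E w M' -> #|M' :&: Ep| <= #|M :&: Ep|)%N.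
Proof.
move=> _ [feas _] _ [pmM minM].
have EcsE : Ecs E w pi p \subset E by apply/subsetP => e; rewrite inE => /andP[].
have pmME : is_perfect_matching E M.
  move: pmM => [[sub Hm] Hc]; split=> //; split=> //; exact: subset_trans EcsE.
have wM : (mweight w M)%:~R = dual_objective pi p :> R.
  rewrite /mweight rmorph_sum -(pm_obj pi p pmME); apply: eq_bigr => e He.
  move: pmM => [[/subsetP sub _] _]; move: (sub e He); rewrite inE => /andP[_ /eqP ->].
  by [].
have lb : forall M', is_perfect_matching E M' ->
    dual_objective pi p <= (mweight w M')%:~R :> R.
  move=> M' H'; rewrite -(pm_obj pi p H') /mweight rmorph_sum.
  apply: ler_sum => e He; move: H' => [[/subsetP sub _] _].
  by case: e He => u v He; apply: feas; apply: sub.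
have minw : is_min_weight_pm E w M.
  split=> // M' H'; rewrite -(ler_int R) wM; exact: lb.
split=> // M' [pm' min'].
have eqw : (mweight w M')%:~R = dual_objective pi p :> R.
  apply/eqP; rewrite eq_le lb // andbT -wM ler_int; exact: min'.
have tight : forall e, e \in M' -> pi e.1 + p e.2 = (w e)%:~R.
  have H0 : \sum_(e in M') ((w e)%:~R - (pi e.1 + p e.2)) = 0 :> R.
    rewrite sumrB (pm_obj pi p pm') -eqw /mweight rmorph_sum subrr //.
  have nn : forall e, e \in M' -> 0 <= (w e)%:~R - (pi e.1 + p e.2) :> R.
    move=> e He; rewrite subr_ge0; move: pm' => [[/subsetP sub _] _].
    by case: e He => u v He; apply: feas; apply: sub.
  move=> e He; have := (psumr_eq0P nn H0) e He.
  by move/eqP; rewrite subr_eq0 => /eqP ->.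
have pmE' : is_perfect_matching (Ecs E w pi p) M'.
  move: pm' => [[sub Hm] Hc]; split=> //; split=> //.
  apply/subsetP => e He; rewrite inE (subsetP sub e He) /=; apply/eqP; exact: tight.
have := minM M' pmE'; rewrite !wp_weight lez_nat => Hle.
have cM := cardsID Ep M; have cM' := cardsID Ep M'.
rewrite (pm_card pmM) in cM; rewrite (pm_card pm') in cM'.
move: cM cM' Hle.
move: #|M :&: Ep| #|M :\: Ep| #|M' :&: Ep| #|M' :\: Ep| #|U| => a b c d n.
lia.
Qed.
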